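(* Let $\mathfrak g$ be of type $A_n$, $B_n$ or $D_n$, $i\in I$ and $b\in\mathcal B(\infty)$, and let $\sigma_i^\ast(b)=\max\{\Sigma^\ast_\tau(b):\tau\in\Pi_i^\ast\}$. If $\sigma_i^\ast(b)=\Sigma^\ast_\lambda(b)=\Sigma^\ast_\mu(b)$ for some $\lambda,\mu\in\Pi_i^\ast$, then $\sigma_i^\ast(b)=\Sigma^\ast_{\lambda\cup\mu}(b)=\Sigma^\ast_{\lambda\cap\mu}(b)$.
   Context: $I=\{1,\dots,n\}$, Cartan integers $a_{ij}$: $a_{ii}=2$; for $i\ne j$: type $A_n$: $a_{ij}=-1$ if $|i-j|=1$, else $0$; type $B_n$: same but $a_{n,n-1}=-2$; type $D_n$ ($n\ge4$): $a_{ij}=-1$ iff $\{i,j\}=\{k,k+1\}$, $k\le n-2$, or $\{i,j\}=\{n-2,n\}$, else $0$. Index sets $\mathcal I^A=\{(s,t):s+t\le n+1\}$, $\mathcal I^B=\{(s,t):1\le s\le n\}$, $\mathcal I^D=\{(s,t):1\le s\le n-1\}$ ($s\ge1$, $t\in I$). $\mathcal B(\infty)\subset\mathbb Z_{\ge0}^{\mathcal I}$ is the polyhedral realization of $B(\infty)$ for the sequence $(\dots,n,\dots,1,n,\dots,1)$ (explicitly: type $A$: $b_{1,k}\ge b_{2,k-1}\ge\dots\ge b_{k,1}$, $1\le k\le n$; types $B,D$: analogous known inequalities); only the following is needed. Convention $b_{s,t}=0$ for $(s,t)\notin\mathcal I$. $\partial^\ast_{s,t}(b)=b_{s-1,t}+\sum_{k>t}a_{tk}b_{s-1,k}+\sum_{k<t}a_{tk}b_{s,k}+b_{s,t}$.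 Tableaux $T_i^\ast$: for $i\le n$ (type $A$), $i\le n-1$ (type $B$), $i\le n-2$ (type $D$), shape $(i)$ with $T_i^\ast(1,t)=\partial^\ast_{t,i+1-t}$; type $B_n$: $T_n^\ast$ of shape $(n,n-1,\dots,1)$ with $T_n^\ast(s,t)=2\partial^\ast_{s+t-1,n-t}$ ($t\ge2$), $T_n^\ast(s,1)=\partial^\ast_{s,n}$; type $D_n$: $T_{n-1}^\ast,T_n^\ast$ of shape $(n-1,\dots,1)$ with $T(s,t)=\partial^\ast_{s+t-1,n-t}$ ($t\ge2$), $T^\ast_{n-1}(s,1)=\partial^\ast_{s,n-1}$ for odd $s$ and $\partial^\ast_{s,n}$ for even $s$, $T_n^\ast(s,1)$ the same with $n-1,n$ swapped. $\Pi_i^\ast$: nonempty strict partitions with diagram contained in the shape of $T_i^\ast$. $\Sigma^\ast_\lambda(b)=\sum_{(s,t)\in\lambda}T_i^\ast(s,t)(b)$. For partitions, $\lambda\cup\mu=(\max(\lambda_k,\mu_k))_k$, $\lambda\cap\mu=(\min(\lambda_k,\mu_k))_k$. *)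

(* Defs.v *)
From mathcomp Require Import all_boot all_order all_algebra.
Set Implicit Arguments. Unset Strict Implicit. Unset Printing Implicit Defensive.
Import Order.TTheory GRing.Theory Num.Theory.
Local Open Scope ring_scope.

Inductive ctype := TA | TB | TD.

Definition valid_type (ty : ctype) (n : nat) : bool :=
  match ty with TA => (1 <= n)%N | TB => (2 <= n)%N | TD => (4 <= n)%N end.

Definition inI (n i : nat) : bool := (1 <= i <= n)%N.

(* Cartan integers a_{ij}; set to 0 when i or j is not in I *)
Definition cartan (ty : ctype) (n i j : nat) : int :=
  if inI n i && inI n j then
    if i == j then 2 else
    match ty with
    | TA => if (i == j.+1) || (j == i.+1) then -1 else 0
    | TB => if (i == n) && (j == n.-1) then -2
            else if (i == j.+1) || (j == i.+1) then -1 else 0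
    | TD => if (((i == j.+1) || (j == i.+1)) && (maxn i j <= n.-1)%N)
               || ((i == n.-2) && (j == n)) || ((i == n) && (j == n.-2))
            then -1 else 0
    end
  else 0.

Definition in_idx (ty : ctype) (n s t : nat) : bool :=
  [&& (1 <= s)%N, inI n t &
   match ty with
   | TA => (s + t <= n.+1)%N
   | TB => (s <= n)%N
   | TD => (s <= n.-1)%N
   end].

(* convention b_{s,t} = 0 for (s,t) outside the index set *)
Definition bv (ty : ctype) (n : nat) (b : nat -> nat -> int) (s t : nat) : int :=
  if in_idx ty n s t then b s t else 0.

Definition nonneg_vec (ty : ctype) (n : nat) (b : nat -> nat -> int) : Prop :=
  forall s t, in_idx ty n s t -> 0 <= b s t.

Definition dstar (ty : ctype) (n : nat) (s t : nat) (b : nat -> nat -> int) : int :=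
  bv ty n b s.-1 t
  + \sum_(t.+1 <= k < n.+1) cartan ty n t k * bv ty n b s.-1 k
  + \sum_(1 <= k < t) cartan ty n t k * bv ty n b s k
  + bv ty n b s t.

(* shape of the tableau T_i^* (row lengths, top to bottom) *)
Definition tshape (ty : ctype) (n i : nat) : seq nat :=
  match ty with
  | TA => [:: i]
  | TB => if (i <= n.-1)%N then [:: i] else rev (iota 1 n)
  | TD => if (i <= n.-2)%N then [:: i] else rev (iota 1 n.-1)
  end.

(* entries T_i^*(s,t) (s = row, t = column, both starting at 1) *)
Definition tentry (ty : ctype) (n i s t : nat) (b : nat -> nat -> int) : int :=
  let row := dstar ty n t (i.+1 - t) b in
  match ty with
  | TA => row
  | TB => if (i <= n.-1)%N then row
          else if (2 <= t)%N then 2 * dstar ty n (s + t - 1) (n - t) b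
          else dstar ty n s n b
  | TD => if (i <= n.-2)%N then row
          else if (2 <= t)%N then dstar ty n (s + t - 1) (n - t) b
          else if odd s == (i == n.-1) then dstar ty n s n.-1 b
          else dstar ty n s n b
  end.

(* partitions are sequences of (positive) parts; lam k = nth 0 lam k is the
   length of row k+1 *)
Definition strict_part (lam : seq nat) : bool :=
  all (fun x => 0 < x)%N lam && sorted (fun x y => y < x)%N lam.

Definition inPi (ty : ctype) (n i : nat) (lam : seq nat) : Prop :=
  lam != [::] /\ strict_part lam /\
  forall k, (nth 0 lam k <= nth 0 (tshape ty n i) k)%N.

Definition Sigma (ty : ctype) (n i : nat) (lam : seq nat) (b : nat -> nat -> int) : int :=
  \sum_(0 <= r < size lam) \sum_(0 <= c < nth 0 lam r) tentry ty n i r.+1 c.+1 b.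

Definition part_union (lam mu : seq nat) : seq nat :=
  mkseq (fun k => maxn (nth 0 lam k) (nth 0 mu k)) (maxn (size lam) (size mu)).

Definition part_inter (lam mu : seq nat) : seq nat :=
  mkseq (fun k => minn (nth 0 lam k) (nth 0 mu k)) (minn (size lam) (size mu)).

Definition is_sigma (ty : ctype) (n i : nat) (b : nat -> nat -> int) (x : int) : Prop :=
  (exists2 tau, inPi ty n i tau & x = Sigma ty n i tau b) /\
  (forall tau, inPi ty n i tau -> Sigma ty n i tau b <= x).

(* Main.v *)
Require Import Defs.
From mathcomp Require Import all_boot all_order all_algebra.
From mathcomp Require Import zify.
Import Order.TTheory GRing.Theory Num.Theory.

Lemma strictP (s : seq nat) : strict_part s <->
  ((forall k, (k < size s)%N -> (0 < nth 0 s k)%N) /\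
   (forall k, (k < size s)%N -> (nth 0 s k.+1 < nth 0 s k)%N)).
Proof.
rewrite /strict_part; split.
- case/andP => /(all_nthP 0) H1 /(sortedP 0) H2; split => // k Hk.
  case: (ltnP k.+1 (size s)) => Hk1; first exact: H2.
  by rewrite nth_default //; apply: H1.
- case=> H1 H2; apply/andP; split; first by apply/(all_nthP 0).
  apply/(sortedP 0) => k Hk; apply: H2; exact: ltnW.
Qed.

Lemma nth_union lam mu k :
  nth 0 (part_union lam mu) k = maxn (nth 0 lam k) (nth 0 mu k).
Proof.
rewrite /part_union; case: (ltnP k (maxn (size lam) (size mu))) => Hk.
  by rewrite nth_mkseq.
rewrite nth_default ?size_mkseq //.
rewrite geq_max in Hk; case/andP: Hk => H1 H2.
by rewrite !nth_default.
Qed.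

Lemma nth_inter lam mu k :
  nth 0 (part_inter lam mu) k = minn (nth 0 lam k) (nth 0 mu k).
Proof.
rewrite /part_inter; case: (ltnP k (minn (size lam) (size mu))) => Hk.
  by rewrite nth_mkseq.
rewrite nth_default ?size_mkseq //.
rewrite geq_min in Hk; case/orP: Hk => H.
  by rewrite (nth_default 0 H) min0n.
by rewrite (nth_default 0 H) minn0.
Qed.

Lemma Sigma_ext ty n i b lam N : (size lam <= N)%N ->
  Sigma ty n i lam b = (\sum_(0 <= r < N)
     \sum_(0 <= c < nth 0%N lam r) tentry ty n i r.+1 c.+1 b)%R.
Proof.
move=> HN; rewrite /Sigma (@big_cat_nat _ _ _ (size lam) 0 N) /=; last by []; last by [].

rewrite [X in (_ + X)%R]big_nat_cond [X in (_ + X)%R]big1; first by rewrite GRing.addr0.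
move=> r; rewrite andbT => /andP [Hr _].
by rewrite nth_default // big_geq.
Qed.

Local Open Scope ring_scope.

Theorem lemma3p7 (ty : ctype) (n : nat) (Hty : valid_type ty n)
  (i : nat) (Hi : inI n i) (b : nat -> nat -> int) (Hb : nonneg_vec ty n b)
  (sigma : int) (Hsigma : is_sigma ty n i b sigma)
  (lam mu : seq nat) (Hlam : inPi ty n i lam) (Hmu : inPi ty n i mu) :
  sigma = Sigma ty n i lam b -> sigma = Sigma ty n i mu b ->
  sigma = Sigma ty n i (part_union lam mu) b /\
  sigma = Sigma ty n i (part_inter lam mu) b.
Proof.
move=> El Em.
case: Hlam => Hl0 [/strictP [Pl Ql] Cl].
case: Hmu => Hm0 [/strictP [Pm Qm] Cm].
have szl : (0 < size lam)%N by case: lam Hl0 {El Pl Ql Cl}.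
have szm : (0 < size mu)%N by case: mu Hm0 {Em Pm Qm Cm}.
have Hu : inPi ty n i (part_union lam mu).
  split; first by rewrite -size_eq0 size_mkseq -lt0n; lia.
  split; last by move=> k; rewrite nth_union geq_max Cl Cm.
  apply/strictP; rewrite size_mkseq; split => k Hk; rewrite !nth_union.
    case: (ltnP k (size lam)) => Hkl; first by have := Pl k Hkl; lia.
    have Hkm : (k < size mu)%N by lia.
    by have := Pm k Hkm; lia.
  rewrite gtn_max; apply/andP; split.
    case: (ltnP k (size lam)) => Hkl; first by have := Ql k Hkl; lia.
    have Hkm : (k < size mu)%N by lia.
    rewrite (@nth_default _ 0%N lam k.+1); last by lia.
    by have := Pm k Hkm; lia.
  case: (ltnP k (size mu)) => Hkm; first by have := Qm k Hkm; lia.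
  have Hkl : (k < size lam)%N by lia.
  rewrite (@nth_default _ 0%N mu k.+1); last by lia.
  by have := Pl k Hkl; lia.
have Hn : inPi ty n i (part_inter lam mu).
  split; first by rewrite -size_eq0 size_mkseq -lt0n; lia.
  split; last first.
    move=> k; rewrite nth_inter; apply: leq_trans (Cl k); exact: geq_minl.
  apply/strictP; rewrite size_mkseq; split => k Hk; rewrite !nth_inter.
    have Hkl : (k < size lam)%N by lia.
    have Hkm : (k < size mu)%N by lia.
    by have := Pl k Hkl; have := Pm k Hkm; lia.
  have Hkl : (k < size lam)%N by lia.
  have Hkm : (k < size mu)%N by lia.
  by have := Ql k Hkl; have := Qm k Hkm; lia.
case: Hsigma => _ Hmax.
have Su := Hmax _ Hu; have Sn := Hmax _ Hn.
set N := (size lam + size mu)%N.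
have E : Sigma ty n i (part_union lam mu) b + Sigma ty n i (part_inter lam mu) b
       = Sigma ty n i lam b + Sigma ty n i mu b.
  rewrite !(@Sigma_ext _ _ _ _ _ N); try (rewrite /N ?size_mkseq; lia).
  rewrite -!big_split /=; apply: eq_bigr => r _.
  rewrite nth_union nth_inter.
  case: (leqP (nth 0%N lam r) (nth 0%N mu r)) => H.
    by rewrite addrC.
  by [].
move: Su Sn E; rewrite -El -Em; lia.
Qed.
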